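(* Let $K$ be a field, $p\colon A\to B$ a morphism of cocommutative Hopf algebras over $K$, and $i\colon C\to B$ the inclusion of a Hopf subalgebra $C$ of $B$. Let $p^{-1}(C)=\{x\in A \mid (p\otimes \mathrm{id}_A)\Delta(x)-1\otimes x\in C^+\otimes A\}$, let $j\colon p^{-1}(C)\to A$ be the inclusion and $\hat p\colon p^{-1}(C)\to C$ the restriction of $p$. Then $p(p^{-1}(C))\subseteq C$ (so $\hat p$ is well defined) and the square with $i\circ \hat p = p\circ j$ is a pullback in the category $\mathsf{Hopf}_{K,coc}$ of cocommutative Hopf algebras over $K$.
   Context: For a coalgebra $C$ with counit $\epsilon$, $C^+=\{x\in C\mid \epsilon(x)=0\}$. $p^{-1}(C)$ is a Hopf subalgebra of $A$ (the h-inverse of $C$ along $p$). Morphisms in $\mathsf{Hopf}_{K,coc}$ are linear maps that are algebra and coalgebra morphisms. *)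

(* Defs.v *)
From HB Require Import structures.
From mathcomp Require Import all_boot all_algebra.
From Stdlib Require List.
Set Implicit Arguments. Unset Strict Implicit. Unset Printing Implicit Defensive.
Import GRing.Theory.
Local Open Scope ring_scope.

Section Hopf.
Variable K : fieldType.

(* An element of V (x) W is written as a finite sum  sum_i v_i (x) w_i,
   represented by the list of pairs (v_i, w_i).  Two such representations
   denote the same element of V (x) W iff every bilinear map out of V x W
   (into any K-vector space M) takes the same value on them (universal
   property of the tensor product). *)
Definition bilin (V W M : lmodType K) (f : V -> W -> M) : Prop :=
  (forall (a : K) v v' w, f (a *: v + v') w = a *: f v w + f v' w) /\
  (forall (a : K) v w w', f v (a *: w + w') = a *: f v w + f v w').

Definition trilin (U V W M : lmodType K) (f : U -> V -> W -> M) : Prop :=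
  (forall (a : K) u u' v w, f (a *: u + u') v w = a *: f u v w + f u' v w) /\
  (forall (a : K) u v v' w, f u (a *: v + v') w = a *: f u v w + f u v' w) /\
  (forall (a : K) u v w w', f u v (a *: w + w') = a *: f u v w + f u v w').

Definition tens_eq (V W : lmodType K) (t t' : seq (V * W)) : Prop :=
  forall (M : lmodType K) (f : V -> W -> M), bilin f ->
    \sum_(q <- t) f q.1 q.2 = \sum_(q <- t') f q.1 q.2.

Definition tens3_eq (U V W : lmodType K) (t t' : seq (U * V * W)) : Prop :=
  forall (M : lmodType K) (f : U -> V -> W -> M), trilin f ->
    \sum_(q <- t) f q.1.1 q.1.2 q.2 = \sum_(q <- t') f q.1.1 q.1.2 q.2.

Definition lin_map (V W : lmodType K) (f : V -> W) : Prop :=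
  forall (a : K) v v', f (a *: v + v') = a *: f v + f v'.

Record hopfType := Hopf {
  hcar :> algType K;
  cop : hcar -> seq (hcar * hcar);
  cou : hcar -> K;
  ant : hcar -> hcar;
  cop_lin : forall (a : K) x y,
    tens_eq (cop (a *: x + y))
            ([seq (a *: q.1, q.2) | q <- cop x] ++ cop y);
  cou_lin : forall (a : K) x y, cou (a *: x + y) = a * cou x + cou y;
  ant_lin : lin_map ant;
  coassoc : forall x,
    tens3_eq [seq (r.1, r.2, q.2) | q <- cop x, r <- cop q.1]
             [seq (q.1, r.1, r.2) | q <- cop x, r <- cop q.2];
  counitl : forall x, \sum_(q <- cop x) cou q.1 *: q.2 = x;
  counitr : forall x, \sum_(q <- cop x) cou q.2 *: q.1 = x;
  cop1 : tens_eq (cop 1) [:: (1, 1)];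
  copM : forall x y,
    tens_eq (cop (x * y)) [seq (q.1 * r.1, q.2 * r.2) | q <- cop x, r <- cop y];
  cou1 : cou 1 = 1;
  couM : forall x y, cou (x * y) = cou x * cou y;
  antipodel : forall x, \sum_(q <- cop x) ant q.1 * q.2 = (cou x)%:A;
  antipoder : forall x, \sum_(q <- cop x) q.1 * ant q.2 = (cou x)%:A;
  cocomm : forall x, tens_eq (cop x) [seq (q.2, q.1) | q <- cop x]
}.

Definition hopf_morph (A B : hopfType) (f : A -> B) : Prop :=
  [/\ lin_map f, f 1 = 1, (forall x y, f (x * y) = f x * f y),
      (forall x, cou (f x) = cou x) &
      (forall x, tens_eq (cop (f x)) [seq (f q.1, f q.2) | q <- cop x])].

Definition hopf_subalg (B : hopfType) (C : B -> Prop) : Prop :=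
  [/\ C 1, (forall (a : K) x y, C x -> C y -> C (a *: x + y)),
      (forall x y, C x -> C y -> C (x * y)),
      (forall x, C x -> C (ant x)) &
      (forall x, C x -> exists t : seq (B * B),
          List.Forall (fun q => C q.1 /\ C q.2) t /\ tens_eq (cop x) t)].

Definition augm (B : hopfType) (C : B -> Prop) (x : B) : Prop :=
  C x /\ cou x = 0.

Definition hinv (A B : hopfType) (p : A -> B) (C : B -> Prop) (x : A) : Prop :=
  exists t : seq (B * A), List.Forall (fun q => augm C q.1) t /\
    tens_eq ([seq (p q.1, q.2) | q <- cop x] ++ [:: (- 1, x)]) t.

End Hopf.

(* Main.v *)
Require Import Defs.
From HB Require Import structures.
From mathcomp Require Import all_boot all_algebra.
From mathcomp Require classical_sets.
From Stdlib Require Import Classical ClassicalEpsilon FunctionalExtensionality ProofIrrelevance.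
Import GRing.Theory.
Local Open Scope ring_scope.
Set Implicit Arguments. Unset Strict Implicit. Unset Printing Implicit Defensive.

Section Lin.
Variable K : fieldType.

Definition linK (V : lmodType K) (f : V -> K) :=
  forall (a : K) v v', f (a *: v + v') = a * f v + f v'.

Section LinMap.
Variables (V W : lmodType K) (f : V -> W) (hf : lin_map f).
Lemma lm0 : f 0 = 0.
Proof. have h := hf 1 0 0; rewrite !scale1r addr0 in h; by apply: (addrI (f 0)); rewrite addr0 -h. Qed.
Lemma lmD x y : f (x + y) = f x + f y.
Proof. by rewrite -{1}[x]scale1r hf scale1r. Qed.
Lemma lmZ a x : f (a *: x) = a *: f x.
Proof. by rewrite -[a *: x]addr0 hf lm0 addr0. Qed.
Lemma lmN x : f (- x) = - f x.
Proof. by rewrite -scaleN1r lmZ scaleN1r. Qed.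
Lemma lmB x y : f (x - y) = f x - f y.
Proof. by rewrite lmD lmN. Qed.
Lemma lm_sum I (s : seq I) (F : I -> V) : f (\sum_(i <- s) F i) = \sum_(i <- s) f (F i).
Proof. elim: s => [|i s IH]; rewrite ?big_nil ?lm0 // !big_cons lmD IH //. Qed.
Lemma lm_sumP I (s : seq I) (P : pred I) (F : I -> V) :
  f (\sum_(i <- s | P i) F i) = \sum_(i <- s | P i) f (F i).
Proof. by rewrite -!(big_filter s) lm_sum. Qed.
End LinMap.

Section LinKs.
Variables (V : lmodType K) (f : V -> K) (hf : linK f).
Lemma lk0 : f 0 = 0.
Proof. have h := hf 1 0 0; rewrite !scale1r mul1r addr0 in h; by apply: (addrI (f 0)); rewrite addr0 -h. Qed.
Lemma lkD x y : f (x + y) = f x + f y.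
Proof. by rewrite -{1}[x]scale1r hf mul1r. Qed.
Lemma lkZ a x : f (a *: x) = a * f x.
Proof. by rewrite -[a *: x]addr0 hf lk0 addr0. Qed.
Lemma lkN x : f (- x) = - f x.
Proof. by rewrite -scaleN1r lkZ mulN1r. Qed.
Lemma lkB x y : f (x - y) = f x - f y.
Proof. by rewrite lkD lkN. Qed.
Lemma lk_sum I (s : seq I) (F : I -> V) : f (\sum_(i <- s) F i) = \sum_(i <- s) f (F i).
Proof. elim: s => [|i s IH]; rewrite ?big_nil ?lk0 // !big_cons lkD IH //. Qed.
End LinKs.

Lemma lin_mapI (V W : lmodType K) (f : V -> W) :
  (forall x y, f (x + y) = f x + f y) -> (forall a x, f (a *: x) = a *: f x) -> lin_map f.
Proof. by move=> hD hZ a x y; rewrite hD hZ. Qed.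
Lemma linKI (V : lmodType K) (f : V -> K) :
  (forall x y, f (x + y) = f x + f y) -> (forall a x, f (a *: x) = a * f x) -> linK f.
Proof. by move=> hD hZ a x y; rewrite hD hZ. Qed.

Section Bil.
Variables (V W M : lmodType K) (f : V -> W -> M) (hf : bilin f).
Lemma blL w : lin_map (f ^~ w). Proof. by move=> a v v'; apply: (proj1 hf). Qed.
Lemma blR v : lin_map (f v). Proof. by move=> a w w'; apply: (proj2 hf). Qed.
End Bil.

Lemma bilinI (V W M : lmodType K) (f : V -> W -> M) :
  (forall w, lin_map (f ^~ w)) -> (forall v, lin_map (f v)) -> bilin f.
Proof. by move=> h1 h2; split=> a v v' w; [apply: h1|apply: h2]. Qed.

Lemma trilinI (U V W M : lmodType K) (f : U -> V -> W -> M) :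
  (forall v w, lin_map (fun u => f u v w)) -> (forall u w, lin_map (fun v => f u v w)) ->
  (forall u v, lin_map (f u v)) -> trilin f.
Proof. by move=> h1 h2 h3; split; [|split]=> *; [apply: h1|apply: h2|apply: h3]. Qed.

Definition tsum (V W M : lmodType K) (F : V -> W -> M) (t : seq (V * W)) :=
  \sum_(q <- t) F q.1 q.2.

Lemma tens_eqE (V W : lmodType K) (t t' : seq (V * W)) :
  tens_eq t t' -> forall (M : lmodType K) (F : V -> W -> M), bilin F -> tsum F t = tsum F t'.
Proof. by move=> h M F hF; apply: h. Qed.

Lemma lm_id (V : lmodType K) : lin_map (@id V). Proof. by []. Qed.
Lemma lm_comp (U V W : lmodType K) (f : V -> W) (g : U -> V) :
  lin_map f -> lin_map g -> lin_map (fun x => f (g x)).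
Proof. by move=> hf hg a x y; rewrite hg hf. Qed.
Lemma lm_sumf (I : Type) (s : seq I) (V W : lmodType K) (F : I -> V -> W) :
  (forall i, lin_map (F i)) -> lin_map (fun x => \sum_(i <- s) F i x).
Proof.
move=> hF a x y; rewrite scaler_sumr -big_split; apply: eq_bigr => i _; exact: hF.
Qed.
Lemma lm_scal (V W : lmodType K) (f : V -> W) (c : K) : lin_map f -> lin_map (fun x => c *: f x).
Proof. by move=> hf a x y; rewrite hf scalerDr !scalerA mulrC. Qed.
Lemma lm_scalK (V W : lmodType K) (g : V -> K) (w : W) : linK g -> lin_map (fun x => g x *: w).
Proof. by move=> hg a x y; rewrite hg scalerDl scalerA. Qed.
Lemma lm_const0 (V W : lmodType K) : lin_map (fun _ : V => (0 : W)).
Proof. by move=> *; rewrite scaler0 addr0. Qed.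
Lemma lm_add (V W : lmodType K) (f g : V -> W) : lin_map f -> lin_map g -> lin_map (fun x => f x + g x).
Proof. by move=> hf hg a x y; rewrite hf hg scalerDr addrACA. Qed.
Lemma lk_scal (V : lmodType K) (f : V -> K) (w : K) : linK f -> linK (fun x => f x * w).
Proof. by move=> hf a x y; rewrite hf mulrDl mulrA. Qed.

Section AlgLin.
Variable (R : algType K).
Lemma lm_mulr (c : R) : lin_map (fun x : R => x * c).
Proof. by move=> a x y; rewrite mulrDl scalerAl. Qed.
Lemma lm_mull (c : R) : lin_map (fun x : R => c * x).
Proof. by move=> a x y; rewrite mulrDr scalerAr. Qed.
End AlgLin.

End Lin.

Section HopfBasic.
Variables (K : fieldType) (H : hopfType K).

Definition cs (M : lmodType K) (x : H) (F : H -> H -> M) := tsum F (cop x).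

Lemma cs_ext (M : lmodType K) x (F G : H -> H -> M) :
  (forall a b, F a b = G a b) -> cs x F = cs x G.
Proof. by move=> e; apply: eq_bigr => q _; rewrite e. Qed.

Lemma cs_lin (M : lmodType K) (F : H -> H -> M) : bilin F -> lin_map (fun x => cs x F).
Proof.
move=> hF a x y; rewrite /cs (tens_eqE (cop_lin a x y) hF) /tsum big_cat big_map /=.
congr (_ + _); rewrite scaler_sumr; apply: eq_bigr => q _; exact: (lmZ (blL hF _)).
Qed.

Lemma couL : linK (@cou _ H). Proof. exact: cou_lin. Qed.
Lemma antL : lin_map (@ant _ H). Proof. exact: ant_lin. Qed.

Lemma counitlE x : cs x (fun a b => cou a *: b) = x. Proof. exact: counitl. Qed.
Lemma counitrE x : cs x (fun a b => cou b *: a) = x. Proof. exact: counitr. Qed.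

Lemma cocommE (M : lmodType K) (F : H -> H -> M) x : bilin F -> cs x F = cs x (fun a b => F b a).
Proof. by move=> hF; rewrite /cs (tens_eqE (cocomm x) hF) /tsum big_map. Qed.

Lemma coassocE (M : lmodType K) (g : H -> H -> H -> M) x : trilin g ->
  \sum_(q <- cop x) cs q.1 (fun a b => g a b q.2) = \sum_(q <- cop x) cs q.2 (g q.1).
Proof.
move=> hg; have h := coassoc x; have := h M g hg; rewrite !big_allpairs_dep /=; exact.
Qed.

Lemma copME (M : lmodType K) (F : H -> H -> M) x y : bilin F ->
  cs (x * y) F = cs x (fun a b => cs y (fun c d => F (a * c) (b * d))).
Proof. by move=> hF; rewrite /cs (tens_eqE (copM x y) hF) /tsum big_allpairs_dep. Qed.

Lemma cop1E (M : lmodType K) (F : H -> H -> M) : bilin F -> cs 1 F = F 1 1.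
Proof. by move=> hF; rewrite /cs (tens_eqE (@cop1 _ H) hF) /tsum big_seq1. Qed.

Lemma antipodelE x : cs x (fun a b => ant a * b) = (cou x)%:A. Proof. exact: antipodel. Qed.
Lemma antipoderE x : cs x (fun a b => a * ant b) = (cou x)%:A. Proof. exact: antipoder. Qed.

Lemma cou_alg (k : K) : cou (k%:A : H) = k.
Proof. by rewrite (lkZ couL) cou1 mulr1. Qed.

Lemma cou_cs x (F : H -> H -> H) : cou (cs x F) = \sum_(q <- cop x) cou (F q.1 q.2).
Proof. exact: (lk_sum couL). Qed.

Lemma ant1 : ant (1 : H) = 1.
Proof.
have := antipoderE 1; rewrite cop1E ?mul1r ?cou1 ?scale1r //.
apply: bilinI => [w|v]; [exact: lm_mulr|exact: lm_comp (lm_mull v) antL].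
Qed.

Lemma couS (x : H) : cou (ant x) = cou x.
Proof.
have e1 : cou (ant x) = \sum_(q <- cop x) cou q.2 * cou (ant q.1).
  rewrite -{1}(counitrE x) /cs /tsum (lm_sum (@antL)) (lk_sum (@couL)).
  by apply: eq_bigr => q _; rewrite (lmZ (@antL)) (lkZ (@couL)).
have := congr1 (@cou _ H) (antipodelE x); rewrite cou_alg cou_cs => <-.
by rewrite e1; apply: eq_bigr => q _; rewrite couM mulrC.
Qed.

End HopfBasic.

Section Morph.
Variables (K : fieldType) (A B : hopfType K) (p : A -> B) (hp : hopf_morph p).

Lemma pL : lin_map p. Proof. by case: hp. Qed.
Lemma p1 : p 1 = 1. Proof. by case: hp. Qed.
Lemma pM x y : p (x * y) = p x * p y. Proof. by case: hp. Qed.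
Lemma pcou x : cou (p x) = cou x. Proof. by case: hp. Qed.
Lemma pcop (M : lmodType K) (F : B -> B -> M) x : bilin F ->
  cs (p x) F = cs x (fun a b => F (p a) (p b)).
Proof. by case: hp => _ _ _ _ h hF; rewrite /cs (tens_eqE (h x) hF) /tsum big_map. Qed.

Lemma pS a : p (ant a) = ant (p a).
Proof.
have hb : bilin (fun u v : B => u * ant v).
  apply: bilinI => [w|v]; [exact: lm_mulr|exact: (lm_comp (lm_mull v) (@antL _ _))].
have e1 : forall q : A, (cou q)%:A = cs q (fun u v => p u * ant (p v)).
  move=> q; rewrite -pcou -antipoderE pcop //.
have e2 : p (ant a) = \sum_(q <- cop a) cs q.2 (fun u v => p (ant q.1) * (p u * ant (p v))).
  rewrite -{1}(counitrE a) /cs /tsum (lm_sum (@antL _ _)) (lm_sum pL).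
  apply: eq_bigr => q _; rewrite (lmZ (@antL _ _)) (lmZ pL) -mulr_algr e1.
  by rewrite /cs /tsum (lm_sum (lm_mull _)).
rewrite e2 -(coassocE (g := fun u v w => p (ant u) * (p v * ant (p w)))); last first.
  apply: trilinI => [v w|u w|u v].
  - exact: (lm_comp (lm_mulr _) (lm_comp pL (@antL _ _))).
  - exact: (lm_comp (lm_mull _) (lm_comp (lm_mulr _) pL)).
  - exact: (lm_comp (lm_mull _) (lm_comp (lm_mull _) (lm_comp (@antL _ _) pL))).
rewrite -{2}(counitlE a) /cs /tsum (lm_sum pL) (lm_sum (@antL _ _)).
apply: eq_bigr => q _; rewrite (lmZ pL) (lmZ (@antL _ _)).
have -> : \sum_(r <- cop q.1) p (ant r.1) * (p r.2 * ant (p q.2))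
   = p (\sum_(r <- cop q.1) ant r.1 * r.2) * ant (p q.2).
  rewrite (lm_sum pL) (lm_sum (lm_mulr _)); apply: eq_bigr => r _.
  by rewrite pM mulrA.
by have := antipodelE q.1; rewrite /cs /tsum => ->; rewrite (lmZ pL) p1 mulr_algl.
Qed.
End Morph.

Section Four.
Variables (K : fieldType) (H : hopfType K).

Lemma lm_cs (V M : lmodType K) (y : H) (E : V -> H -> H -> M) :
  (forall u v, lin_map (fun a => E a u v)) -> lin_map (fun a => cs y (E a)).
Proof. move=> hE; exact: (lm_sumf (cop y) (F := fun q a => E a q.1 q.2) (fun q => hE q.1 q.2)). Qed.

Lemma bl_cs (M : lmodType K) (y : H) (E : H -> H -> H -> H -> M) :
  (forall u v w, lin_map (fun a => E a w u v)) -> (forall u v w, lin_map (fun a => E w a u v)) ->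
  bilin (fun a b => cs y (E a b)).
Proof.
move=> h1 h2; apply: bilinI => [w|v]; apply: lm_cs => u v'; [exact: h1|exact: h2].
Qed.

Definition quadlin (M : lmodType K) (G : H -> H -> H -> H -> M) :=
  [/\ forall b c d, lin_map (fun a => G a b c d), forall a c d, lin_map (fun b => G a b c d),
      forall a b d, lin_map (fun c => G a b c d) & forall a b c, lin_map (fun d => G a b c d)].

Definition L1 (M : lmodType K) (G : H -> H -> H -> H -> M) x :=
  \sum_(q <- cop x) \sum_(r <- cop q.2) cs r.2 (G q.1 r.1).
Definition L2 (M : lmodType K) (G : H -> H -> H -> H -> M) x :=
  \sum_(q <- cop x) cs q.1 (fun a b => cs q.2 (G a b)).
Definition L3 (M : lmodType K) (G : H -> H -> H -> H -> M) x :=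
  \sum_(q <- cop x) \sum_(r <- cop q.2) cs r.1 (fun a b => G q.1 a b r.2).

Lemma L12 (M : lmodType K) (G : H -> H -> H -> H -> M) x : quadlin G -> L1 G x = L2 G x.
Proof.
case=> ha hb hc hd; rewrite /L1 /L2.
have := @coassocE _ H M (fun a b c => cs c (G a b)) x; rewrite /= => ->.
- by apply: eq_bigr => q _.
apply: trilinI => [v w|u w|u v].
- by apply: lm_cs => *; exact: ha.
- by apply: lm_cs => *; exact: hb.
- by apply: cs_lin; apply: bilinI => [w|v']; [exact: hc|exact: hd].
Qed.

Lemma L13 (M : lmodType K) (G : H -> H -> H -> H -> M) x : quadlin G -> L1 G x = L3 G x.
Proof.
case=> ha hb hc hd; rewrite /L1 /L3; apply: eq_bigr => q _.
have := @coassocE _ H M (fun a b c => G q.1 a b c) q.2; rewrite /= => ->; first by [].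
by apply: trilinI => *; [exact: hb|exact: hc|exact: hd].
Qed.

Lemma cocomm_L2 (M : lmodType K) (G : H -> H -> H -> H -> M) x : quadlin G ->
  L2 G x = L2 (fun a b => G b a) x.
Proof.
case=> ha hb hc hd; rewrite /L2; apply: eq_bigr => q _.
rewrite cocommE //; apply: bilinI => [w|v]; apply: lm_cs => *; [exact: ha|exact: hb].
Qed.

End Four.

Section CopS.
Variables (K : fieldType) (H : hopfType K).

Lemma K4 (M : lmodType K) (F : H -> H -> M) (y : H) : bilin F ->
  L2 (fun a b c d => F (a * ant c) (b * ant d)) y = cou y *: F 1 1.
Proof.
move=> hF.
have antl := @antL _ H.
rewrite cocomm_L2; last first.
  split=> *.
  - exact: (lm_comp (blL hF _) (lm_mulr _)).
  - exact: (lm_comp (blR hF _) (lm_mulr _)).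
  - exact: (lm_comp (blL hF _) (lm_comp (lm_mull _) antl)).
  - exact: (lm_comp (blR hF _) (lm_comp (lm_mull _) antl)).
rewrite -L12; last first.
  split=> *.
  - exact: (lm_comp (blR hF _) (lm_mulr _)).
  - exact: (lm_comp (blL hF _) (lm_mulr _)).
  - exact: (lm_comp (blL hF _) (lm_comp (lm_mull _) antl)).
  - exact: (lm_comp (blR hF _) (lm_comp (lm_mull _) antl)).
rewrite L13; last first.
  split=> *.
  - exact: (lm_comp (blR hF _) (lm_mulr _)).
  - exact: (lm_comp (blL hF _) (lm_mulr _)).
  - exact: (lm_comp (blL hF _) (lm_comp (lm_mull _) antl)).
  - exact: (lm_comp (blR hF _) (lm_comp (lm_mull _) antl)).
rewrite /L3.
have e1 : forall r : H * H, forall z, cs r.1 (fun a b => F (a * ant b) z) = cou r.1 *: F 1 z.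
  move=> r z; rewrite /cs /tsum -(lmZ (blL hF z)) -(lm_sum (blL hF z)).
  by have := antipoderE r.1; rewrite /cs /tsum => ->; rewrite -mulr_algl mulr1.
under eq_bigr => q _ do under eq_bigr => r _ do rewrite e1.
have e2 : forall q : H * H, \sum_(r <- cop q.2) cou r.1 *: F 1 (q.1 * ant r.2) = F 1 (q.1 * ant q.2).
  move=> q; rewrite -{2}(counitlE q.2) /cs /tsum (lm_sum antl) (lm_sum (lm_mull _)) (lm_sum (blR hF _)).
  by apply: eq_bigr => r _; rewrite (lmZ antl) (lmZ (lm_mull _)) (lmZ (blR hF _)).
under eq_bigr => q _ do rewrite e2.
rewrite -(lm_sum (blR hF _)).
have := antipoderE y; rewrite /cs /tsum => ->.
by rewrite -(lmZ (blR hF _)) -mulr_algl mulr1.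
Qed.

End CopS.

Section CopS2.
Variables (K : fieldType) (H : hopfType K).

Lemma copS (M : lmodType K) (F : H -> H -> M) (x : H) : bilin F ->
  cs (ant x) F = cs x (fun a b => F (ant a) (ant b)).
Proof.
move=> hF; have antl := @antL _ H.
pose G := fun a b c d => cs (ant a) (fun u1 u2 => cs b (fun v1 v2 : H => F (u1 * v1 * ant c) (u2 * v2 * ant d))).
have qG : quadlin G.
  split=> *.
  - apply: (lm_comp (cs_lin _) antl); apply: bl_cs => *.
    + exact: (lm_comp (blL hF _) (lm_comp (lm_mulr _) (lm_mulr _))).
    + exact: (lm_comp (blR hF _) (lm_comp (lm_mulr _) (lm_mulr _))).
  - apply: lm_cs => *; apply: cs_lin; apply: bilinI => *.
    + exact: (lm_comp (blL hF _) (lm_comp (lm_mulr _) (lm_mull _))).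
    + exact: (lm_comp (blR hF _) (lm_comp (lm_mulr _) (lm_mull _))).
  - apply: lm_cs => *; apply: lm_cs => *.
    exact: (lm_comp (blL hF _) (lm_comp (lm_mull _) antl)).
  - apply: lm_cs => *; apply: lm_cs => *.
    exact: (lm_comp (blR hF _) (lm_comp (lm_mull _) antl)).
have eB : L2 G x = cs (ant x) F.
  rewrite -L12 // /L1.
  have e : forall q : H * H, \sum_(r <- cop q.2) cs r.2 (G q.1 r.1) = cou q.2 *: cs (ant q.1) F.
    move=> q; rewrite /G /cs /tsum.
    under eq_bigr => r _ do (rewrite exchange_big /=; under eq_bigr => u _ do rewrite exchange_big /=).
    rewrite exchange_big /= scaler_sumr; apply: eq_bigr => u _.
    have hb : bilin (fun a b => F (u.1 * a) (u.2 * b)).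
      by apply: bilinI => *; [exact: (lm_comp (blL hF _) (lm_mull _))|exact: (lm_comp (blR hF _) (lm_mull _))].
    have := K4 q.2 hb; rewrite /L2 /cs /tsum /= !mulr1 => <-.
    by apply: eq_bigr => i _; apply: eq_bigr => j _; apply: eq_bigr => k _; rewrite !mulrA.
  under eq_bigr => q _ do rewrite e.
  have ct := counitrE x; rewrite /cs /tsum in ct.
  have := lm_sum (lm_comp (cs_lin hF) antl) (cop x) (fun q => cou q.2 *: q.1).
  rewrite /= ct => ->.
  by apply: eq_bigr => q _; rewrite (lmZ (lm_comp (cs_lin hF) antl)).
rewrite -eB /L2.
have hFS : bilin (fun c d => F (ant c) (ant d)).
  by apply: bilinI => *; [exact: (lm_comp (blL hF _) antl)|exact: (lm_comp (blR hF _) antl)].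
have e : forall q : H * H, cs q.1 (fun a b => cs q.2 (G a b)) = cou q.1 *: cs q.2 (fun c d => F (ant c) (ant d)).
  move=> q.
  pose Hq := fun al be => cs q.2 (fun c d => F (al * ant c) (be * ant d)).
  have hHq : bilin Hq.
    apply: bl_cs => *; [exact: (lm_comp (blL hF _) (lm_mulr _))|exact: (lm_comp (blR hF _) (lm_mulr _))].
  have e2 : forall a b, cs q.2 (G a b) = cs (ant a * b) Hq.
    move=> a b; rewrite copME // /G /Hq /cs /tsum exchange_big /=.
    by apply: eq_bigr => u _; rewrite exchange_big /=.
  rewrite (cs_ext _ e2).
  change (\sum_(i <- cop q.1) cs (ant i.1 * i.2) Hq = cou q.1 *: cs q.2 (fun c d => F (ant c) (ant d))).
  have := lm_sum (cs_lin hHq) (cop q.1) (fun r => ant r.1 * r.2).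
  have ap := antipodelE q.1; rewrite /cs /tsum in ap; rewrite /= ap => <-.
  rewrite (lmZ (cs_lin hHq)) cop1E // /Hq.
  by congr (_ *: _); apply: cs_ext => c d; rewrite !mul1r.
rewrite (eq_bigr _ (fun q _ => e q)).
have ct := counitlE x; rewrite /cs /tsum in ct.
have := lm_sum (cs_lin hFS) (cop x) (fun q => cou q.1 *: q.2).
rewrite /= ct => ->.
by apply: eq_bigr => q _; rewrite (lmZ (cs_lin hFS)).
Qed.
End CopS2.

Section Sep.
Variables (K : fieldType) (V : lmodType K).

Definition subsp (W : V -> Prop) := W 0 /\ forall a x y, W x -> W y -> W (a *: x + y).

Section SubspFacts.
Variables (W : V -> Prop) (hW : subsp W).
Lemma sp0 : W 0. Proof. by case: hW. Qed.
Lemma spD x y : W x -> W y -> W (x + y).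
Proof. by move=> hx hy; rewrite -[x]scale1r; apply: (proj2 hW). Qed.
Lemma spZ a x : W x -> W (a *: x).
Proof. by move=> hx; rewrite -[_ *: _]addr0; apply: (proj2 hW) => //; exact: sp0. Qed.
Lemma spN x : W x -> W (- x).
Proof. by move=> hx; rewrite -scaleN1r; exact: spZ. Qed.
Lemma spB x y : W x -> W y -> W (x - y).
Proof. by move=> hx hy; apply: spD => //; exact: spN. Qed.
End SubspFacts.

Lemma separate (U : V -> Prop) (z : V) : subsp U -> ~ U z ->
  exists phi : V -> K, [/\ linK phi, (forall u, U u -> phi u = 0) & phi z = 1].
Proof.
move=> hU nUz.
pose P := fun W : V -> Prop => (forall x, ~ W x) \/ (subsp W /\ (forall u, U u -> W u) /\ ~ W z).
have := @classical_sets.Zorn_bigcup V P.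
case.
- move=> F FP Ftot; rewrite /classical_sets.bigcup /classical_sets.mkset /=.
  have [[X0 [FX0 [x0 X0x0]]]|none] := classic (exists X, F X /\ exists x, X x); last first.
    left=> x [X FX Xx]; apply: none; by exists X; split=> //; exists x.
  have right : forall X, F X -> forall x, X x -> subsp X /\ (forall u, U u -> X u) /\ ~ X z.
    move=> X FX x Xx; case: (FP X FX) => // /(_ x); done.
  have [sX0 [UX0 _]] := right X0 FX0 x0 X0x0.
  right; split; [split|split].
  + by exists X0; [|exact: (sp0 sX0)].
  + move=> a x y [X1 FX1 X1x] [X2 FX2 X2y].
    have [s1 _] := right X1 FX1 x X1x; have [s2 _] := right X2 FX2 y X2y.
    case: (Ftot X1 X2 FX1 FX2) => sub.
    * by exists X2; first by []; apply: (proj2 s2) => //; apply: sub.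
    * by exists X1; first by []; apply: (proj2 s1) => //; apply: sub.
  + by move=> u Uu; exists X0; last exact: UX0.
  + by move=> [X FX Xz]; have [_ [_ ]] := right X FX z Xz.
move=> A [PA maxA].
have [sA [UA nAz]] : subsp A /\ (forall u, U u -> A u) /\ ~ A z.
  case: PA => // empA; exfalso; apply: (maxA U).
  + split; first by move=> t /empA.
    by move=> sub; apply: (empA 0); apply: sub; exact: sp0.
  + by right; split.
have ex : forall y, exists l : K, A (y - l *: z).
  move=> y; have [Ay|nAy] := classic (A y).
    by exists 0; rewrite scale0r subr0.
  pose Bs := fun w => exists a (m : K), A a /\ w = a + m *: y.
  have sB : subsp Bs.
    split; first by exists 0, 0; rewrite scale0r addr0; split=> //; exact: sp0.
    move=> c w1 w2 [a1 [m1 [A1 ->]]] [a2 [m2 [A2 ->]]].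
    exists (c *: a1 + a2), (c * m1 + m2); split; first by apply: (proj2 sA).
    by rewrite scalerDr scalerDl scalerA addrACA.
  have nPB : ~ P Bs.
    apply: maxA; split.
    + by move=> t At; exists t, 0; rewrite scale0r addr0.
    + by move=> sub; apply: nAy; apply: sub; exists 0, 1; rewrite scale1r add0r; split=> //; exact: sp0.
  have Bz : Bs z.
    apply: NNPP => nBz; apply: nPB; right; split=> //; split=> // u Uu.
    by exists u, 0; rewrite scale0r addr0; split=> //; apply: UA.
  case: Bz => a [m [Aa ez]].
  have m0 : m != 0.
    by apply/eqP => m0; apply: nAz; rewrite ez m0 scale0r addr0.
  exists m^-1; rewrite ez scalerDr scalerA mulVf // scale1r opprD addrA addrAC subrr add0r.
  exact: (spN sA (spZ sA _ Aa)).
have uniq : forall y l l', A (y - l *: z) -> A (y - l' *: z) -> l = l'.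
  move=> y l l' h1 h2; apply: NNPP => nl; apply: nAz.
  have h := spB sA h2 h1.
  have e : y - l' *: z - (y - l *: z) = (l - l') *: z.
    by rewrite opprB addrC addrA addrNK scalerBl.
  rewrite e in h; have := spZ sA (l - l')^-1 h.
  rewrite scalerA mulVf ?scale1r //; rewrite subr_eq0; exact/eqP.
pose phi := fun y => proj1_sig (constructive_indefinite_description _ (ex y)).
have hphi : forall y, A (y - phi y *: z).
  by move=> y; rewrite /phi; case: constructive_indefinite_description.
exists phi; split.
- move=> a x y; apply: (uniq (a *: x + y)) => //.
  have := proj2 sA a _ _ (hphi x) (hphi y).
  by rewrite scalerDl scalerBr scalerA addrACA opprD.
- move=> u Uu; apply: (uniq u) => //; by rewrite scale0r subr0; apply: UA.
- apply: (uniq z) => //; by rewrite scale1r subrr; exact: sp0.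
Qed.

End Sep.

Section Free.
Variables (K : fieldType).

Definition freeL (V : lmodType K) (vs : seq V) :=
  forall c : nat -> K, \sum_(0 <= i < size vs) c i *: vs`_i = 0 ->
    forall i, (i < size vs)%N -> c i = 0.

Lemma sum_splitk (M : zmodType) (n k : nat) (G : nat -> M) : (k < n)%N ->
  \sum_(0 <= i < n) G i = G k + \sum_(0 <= i < n | i != k) G i.
Proof.
move=> kn; rewrite (bigD1_seq k) /= ?mem_iota ?iota_uniq ?add0n ?subn0 //.
Qed.

Lemma dual (V : lmodType K) (vs : seq V) k : freeL vs -> (k < size vs)%N ->
  exists phi : V -> K, linK phi /\ forall i, (i < size vs)%N -> phi vs`_i = (i == k)%:R.
Proof.
move=> fr kn; set n := size vs in kn *.
pose U := fun w => exists c : nat -> K, w = \sum_(0 <= i < n | i != k) c i *: vs`_i.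
have sU : subsp U.
  split; first by exists (fun _ => 0); rewrite big1 // => i _; rewrite scale0r.
  move=> a x y [c1 ->] [c2 ->]; exists (fun i => a * c1 i + c2 i).
  by rewrite scaler_sumr -big_split; apply: eq_bigr => i _; rewrite scalerDl scalerA.
have nU : ~ U vs`_k.
  move=> [c e].
  have := fr (fun i => if i == k then -1 else c i).
  rewrite (sum_splitk _ kn) eqxx scaleN1r.
  rewrite (eq_bigr (fun i => c i *: vs`_i)); last by move=> i /negbTE ->.
  rewrite -e addNr => /(_ erefl k kn); rewrite eqxx => /eqP; by rewrite oppr_eq0 oner_eq0.
have [phi [lphi phU phz]] := separate sU nU.
exists phi; split=> // i ilt.
have [->|ik] := eqVneq i k; first by rewrite phz.
rewrite phU //; exists (fun j => (j == i)%:R).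
rewrite big_mkcond (bigD1_seq i) //= ?mem_iota ?iota_uniq ?add0n ?subn0 // ik eqxx scale1r big1 ?addr0 //.
by move=> j /negbTE ->; rewrite scale0r; case: ifP.
Qed.

Definition swapl (V W : lmodType K) (t : seq (V * W)) := [seq (q.2, q.1) | q <- t].

Lemma swap_tens (V W : lmodType K) (t t' : seq (V * W)) : tens_eq t t' -> tens_eq (swapl t) (swapl t').
Proof.
move=> h M F hF; rewrite !big_map /=.
apply: (h M (fun a b => F b a)); split=> *; [apply: (proj2 hF)|apply: (proj1 hF)].
Qed.

Lemma swapK (V W : lmodType K) (t : seq (V * W)) : swapl (swapl t) = t.
Proof. by rewrite /swapl -map_comp map_id_in // => -[]. Qed.

Lemma reduce (V W : lmodType K) (t : seq (V * W)) : ~ freeL (map fst t) ->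
  exists t', (size t' < size t)%N /\ tens_eq t t'.
Proof.
move=> nf; rewrite /freeL size_map in nf.
have [c [hc [k nk]]] : exists c : nat -> K, \sum_(0 <= i < size t) c i *: (map fst t)`_i = 0 /\
    exists k, (k < size t)%N /\ c k != 0.
  apply: NNPP => hn; apply: nf => c hc i ilt; apply: NNPP => ci; apply: hn.
  by exists c; split=> //; exists i; split=> //; apply/eqP.
case: nk => kn ck.
set n := size t in kn hc *.
pose u := fun i => (nth (0, 0) t i).1.
pose v := fun i => (nth (0, 0) t i).2.
have hu : forall i, (i < n)%N -> (map fst t)`_i = u i by move=> i ilt; rewrite (nth_map (0, 0)).
pose t' := [seq (u i, v i - (c i / c k) *: v k) | i <- [seq i <- iota 0 n | i != k]].
exists t'; split.
  rewrite size_map size_filter.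
  have := count_predC (fun i => i != k) (iota 0 n); rewrite size_iota => {2}<-.
  rewrite -{1}(addn0 (count _ _)) ltn_add2l -has_count.
  by apply/hasP; exists k; rewrite ?mem_iota //= eqxx.
move=> M F hF.
have e1 : \sum_(0 <= i < n | i != k) c i *: u i = - (c k *: u k).
  have h2 : \sum_(0 <= i < n) c i *: u i = 0.
    by rewrite -[RHS]hc; apply: eq_big_nat => i /andP [_ ilt]; rewrite hu.
  by move: h2; rewrite (sum_splitk _ kn) => /eqP; rewrite addrC addr_eq0 => /eqP.
rewrite /t' big_map big_filter /= (big_nth (0, 0)) (sum_splitk _ kn) -/n.
rewrite /index_iota subn0 in e1 *.
have eR : \sum_(i <- iota 0 n | i != k) F (u i) (v i - (c i / c k) *: v k) =
    \sum_(i <- iota 0 n | i != k) F (u i) (v i) + F (u k) (v k).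
  rewrite (eq_bigr (fun i => F (u i) (v i) - (c i / c k) *: F (u i) (v k))); last first.
    move=> i _; by rewrite (lmB (blR hF _)) (lmZ (blR hF _)).
  rewrite big_split /= sumrN.
  have -> : \sum_(i <- iota 0 n | i != k) (c i / c k) *: F (u i) (v k) = - F (u k) (v k).
    transitivity (F ((c k)^-1 *: \sum_(i <- iota 0 n | i != k) c i *: u i) (v k)).
      rewrite (lmZ (blL hF _)) (lm_sumP (blL hF _)) scaler_sumr; apply: eq_bigr => i _.
      by rewrite (lmZ (blL hF _)) scalerA mulrC.
    by rewrite e1 scalerN scalerA mulVf // scale1r (lmN (blL hF _)).
  by rewrite opprK.
by rewrite eR addrC.
Qed.




Lemma tens_refl (V W : lmodType K) (t : seq (V * W)) : tens_eq t t. Proof. by []. Qed.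
Lemma tens_trans (V W : lmodType K) (t1 t2 t3 : seq (V * W)) :
  tens_eq t1 t2 -> tens_eq t2 t3 -> tens_eq t1 t3.
Proof. by move=> h1 h2 M F hF; rewrite (h1 M F hF) (h2 M F hF). Qed.

Lemma both_free (V W : lmodType K) (t0 : seq (V * W)) :
  exists t, tens_eq t0 t /\ freeL (map fst t) /\ freeL (map snd t).
Proof.
suff: forall n (t : seq (V * W)), (size t <= n)%N -> tens_eq t0 t ->
    exists t, tens_eq t0 t /\ freeL (map fst t) /\ freeL (map snd t).
  by move=> /(_ (size t0) t0 (leqnn _) (@tens_refl _ _ t0)).
elim=> [|n IH] t.
- rewrite leqn0 => /eqP /size0nil -> h; exists ([::] : seq (V * W)); split=> //.
- move=> st h.
  have [f1|nf1] := classic (freeL (map fst t)); last first.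
    have [t' [st' ht']] := reduce nf1.
    by apply: (IH t') => //; [rewrite -ltnS; exact: leq_trans st' st|exact: tens_trans h ht'].
  have [f2|nf2] := classic (freeL (map snd t)); first by exists t.
  have nf2' : ~ freeL (map fst (swapl t)) by rewrite /swapl -map_comp.
  have [t' [st' ht']] := reduce nf2'.
  apply: (IH (swapl t')).
    by rewrite size_map -ltnS; apply: leq_trans st' _; rewrite size_map.
  apply: tens_trans h _; rewrite -[t]swapK; exact: swap_tens.
Qed.

Lemma extract (V W : lmodType K) (t : seq (V * W)) (phi : V -> K) k : (k < size t)%N ->
  (forall i, (i < size t)%N -> phi (map fst t)`_i = (i == k)%:R) ->
  \sum_(q <- t) phi q.1 *: q.2 = (nth (0, 0) t k).2.
Proof.
move=> kn hphi; rewrite (big_nth (0, 0)) (sum_splitk _ kn).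
have e : forall i, (i < size t)%N -> phi (nth (0, 0) t i).1 = (i == k)%:R.
  by move=> i ilt; rewrite -hphi // (nth_map (0, 0)).
rewrite e // eqxx scale1r big_nat_cond big1 ?addr0 // => i /andP [/andP [_ ilt] ik].
by rewrite e ?(negbTE ik) ?scale0r.
Qed.

End Free.

Lemma Forall_mapI (T U : Type) (P : T -> Prop) (Q : U -> Prop) (f : T -> U) (t : seq T) :
  (forall q, P q -> Q (f q)) -> List.Forall P t -> List.Forall Q (map f t).
Proof. move=> h; elim=> [|a l Pa Pl IH] //=; constructor; [exact: h|exact: IH]. Qed.

Lemma Forall_catI (T : Type) (P : T -> Prop) (t1 t2 : seq T) :
  List.Forall P t1 -> List.Forall P t2 -> List.Forall P (t1 ++ t2).
Proof. by move=> h1 h2; apply/List.Forall_app. Qed.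

Lemma Forall_allpairsI (T U R : Type) (P : T -> Prop) (Q : U -> Prop) (S : R -> Prop)
  (f : T -> U -> R) (t1 : seq T) (t2 : seq U) :
  (forall a b, P a -> Q b -> S (f a b)) -> List.Forall P t1 -> List.Forall Q t2 ->
  List.Forall S [seq f a b | a <- t1, b <- t2].
Proof.
move=> h; elim=> [|a l Pa Pl IH] //= h2; apply: Forall_catI; last exact: IH.
by apply: Forall_mapI h2 => b Qb; apply: h.
Qed.

Lemma Forall_nthI (T : Type) (P : T -> Prop) (d : T) (t : seq T) :
  (forall k, (k < size t)%N -> P (nth d t k)) -> List.Forall P t.
Proof.
elim: t => [|a l IH] h //=; constructor; first exact: (h 0%N).
by apply: IH => k kl; apply: (h k.+1).
Qed.

Section Main.
Variables (K : fieldType) (A B : hopfType K) (p : A -> B) (C : B -> Prop).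
Hypotheses (hp : hopf_morph p) (hC : hopf_subalg C).

Lemma C1 : C 1. Proof. by case: hC => h. Qed.
Lemma Clin (a : K) (x y : B) : C x -> C y -> C (a *: x + y). Proof. case: hC => _ h _ _ _; exact: h. Qed.
Lemma CM (x y : B) : C x -> C y -> C (x * y). Proof. case: hC => _ _ h _ _; exact: h. Qed.
Lemma CS (x : B) : C x -> C (ant x). Proof. case: hC => _ _ _ h _; exact: h. Qed.
Lemma C0 : C 0. Proof. by have := Clin (-1) C1 C1; rewrite scaleN1r addNr. Qed.
Lemma CD x y : C x -> C y -> C (x + y). Proof. by move=> hx hy; rewrite -[x]scale1r; apply: Clin. Qed.
Lemma CZ a x : C x -> C (a *: x). Proof. by move=> hx; rewrite -[_ *: _]addr0; apply: Clin => //; exact: C0. Qed.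
Lemma Csum (I : Type) (P : I -> Prop) (h : I -> B) (t : seq I) :
  (forall q, P q -> C (h q)) -> List.Forall P t -> C (\sum_(q <- t) h q).
Proof.
move=> hh; elim=> [|a l Pa Pl IH]; rewrite ?big_nil ?big_cons; first exact: C0.
by apply: CD => //; apply: hh.
Qed.

Definition hform (x : A) (t : seq (B * A)) :=
  forall (M : lmodType K) (F : B -> A -> M), bilin F ->
    cs x (fun a b => F (p a) b) = F 1 x + tsum F t.

Lemma hinvE x : hinv p C x <-> exists t, List.Forall (fun q => augm C q.1) t /\ hform x t.
Proof.
split=> -[t [Ft ht]]; exists t; split=> // M F hF.
- have := ht M F hF; rewrite /tsum big_cat big_map big_seq1 /= => <-.
  by rewrite (lmN (blL hF _)) addrC addrA subrr add0r.
- move: (ht M F hF); rewrite /cs /tsum => e; rewrite big_cat big_map big_seq1 /= e.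
  by rewrite (lmN (blL hF _)) addrAC subrr add0r.
Qed.

Lemma part1 x : hinv p C x -> C (p x).
Proof.
case/hinvE=> t [Ft ht].
have hF : bilin (fun (a : B) (b : A) => cou b *: a).
  apply: bilinI => [w|v]; [move=> ? ? ?; rewrite scalerDr !scalerA mulrC //|exact: (lm_scalK _ (@couL _ _))].
have := ht _ _ hF.
have -> : cs x (fun a b => cou b *: p a) = p x.
  by rewrite -{2}(counitrE x) /cs /tsum (lm_sum (pL hp)); apply: eq_bigr => q _; rewrite (lmZ (pL hp)).
move=> ->; apply: CD; first by apply: CZ; exact: C1.
by apply: (Csum (P := fun q => augm C q.1)) Ft => q [Cq _]; apply: CZ.
Qed.


Lemma augm_cou (c : B) : augm C c -> cou c = 0. Proof. by case. Qed.

Lemma hinv1 : hinv p C 1.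
Proof.
apply/hinvE; exists [::]; split=> // M F hF.
by rewrite cop1E ?(p1 hp) /tsum ?big_nil ?addr0 //; apply: bilinI => *;
  [exact: (lm_comp (blL hF _) (pL hp))|exact: blR].
Qed.

Lemma bilin_p (M : lmodType K) (F : B -> A -> M) : bilin F -> bilin (fun a b => F (p a) b).
Proof. by move=> hF; apply: bilinI => *; [exact: (lm_comp (blL hF _) (pL hp))|exact: blR]. Qed.

Lemma hinv_lin (a : K) x y : hinv p C x -> hinv p C y -> hinv p C (a *: x + y).
Proof.
case/hinvE=> tx [Fx hx]; case/hinvE=> ty [Fy hy]; apply/hinvE.
exists ([seq (a *: q.1, q.2) | q <- tx] ++ ty); split.
  apply: Forall_catI => //; apply: Forall_mapI Fx => q [Cq cq]; split; first exact: CZ.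
  by rewrite (lkZ (@couL _ _)) cq mulr0.
move=> M F hF; rewrite (cs_lin (bilin_p hF)) hx // hy // /tsum big_cat big_map /=.
rewrite (lmD (blR hF _)) (lmZ (blR hF _)) scalerDr.
rewrite [X in _ = _ + (X + _)](eq_bigr (fun q => a *: F q.1 q.2)); last by move=> q _; rewrite (lmZ (blL hF _)).
by rewrite -scaler_sumr !addrA; congr (_ + _); rewrite addrAC.
Qed.

Lemma hinv_mul x y : hinv p C x -> hinv p C y -> hinv p C (x * y).
Proof.
case/hinvE=> tx [Fx hx]; case/hinvE=> ty [Fy hy]; apply/hinvE.
exists ([seq (q.1, q.2 * y) | q <- tx] ++ [seq (q.1, x * q.2) | q <- ty] ++
        [seq (q.1 * r.1, q.2 * r.2) | q <- tx, r <- ty]); split.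
  apply: Forall_catI; first by apply: Forall_mapI Fx.
  apply: Forall_catI; first by apply: Forall_mapI Fy.
  apply: (Forall_allpairsI (P := fun q => augm C q.1) (Q := fun q => augm C q.1)) => //.
  move=> q r [Cq cq] [Cr cr]; split; first exact: CM.
  by rewrite couM cq mul0r.
move=> M F hF; rewrite copME; last exact: bilin_p.
have e1 : forall a b, cs y (fun c d => F (p (a * c)) (b * d)) =
    F (p a) (b * y) + \sum_(r <- ty) F (p a * r.1) (b * r.2).
  move=> a b; rewrite (cs_ext _ (fun c d => congr1 (fun z => F z (b * d)) (pM hp a c))).
  have hG : bilin (fun u v => F (p a * u) (b * v)).
    by apply: bilinI => *; [exact: (lm_comp (blL hF _) (lm_mull _))|exact: (lm_comp (blR hF _) (lm_mull _))].
  by rewrite (hy _ _ hG) mulr1.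
rewrite (cs_ext _ e1) /cs /tsum big_split /= -/(cs x _).
have hH1 : bilin (fun u v => F u (v * y)).
  by apply: bilinI => *; [exact: blL|exact: (lm_comp (blR hF _) (lm_mulr _))].
have := hx _ _ hH1; rewrite /cs /tsum => ->.
rewrite exchange_big /=.
have e2 : forall r : B * A, \sum_(q <- cop x) F (p q.1 * r.1) (q.2 * r.2) =
    F r.1 (x * r.2) + \sum_(q <- tx) F (q.1 * r.1) (q.2 * r.2).
  move=> r; have hG : bilin (fun u v => F (u * r.1) (v * r.2)).
    by apply: bilinI => *; [exact: (lm_comp (blL hF _) (lm_mulr _))|exact: (lm_comp (blR hF _) (lm_mulr _))].
  by have := hy; have := hx _ _ hG; rewrite /cs /tsum mul1r => -> _.
rewrite (eq_bigr _ (fun r _ => e2 r)) big_split /= big_cat big_map big_cat big_map big_allpairs_dep /=.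
rewrite [X in _ = _ + (_ + (_ + X))]exchange_big /=.
by rewrite !addrA.
Qed.

Lemma hinv_ant x : hinv p C x -> hinv p C (ant x).
Proof.
case/hinvE=> tx [Fx hx]; apply/hinvE.
exists [seq (ant q.1, ant q.2) | q <- tx]; split.
  apply: Forall_mapI Fx => q [Cq cq]; split; first exact: CS.
  by rewrite couS.
move=> M F hF; rewrite copS; last exact: bilin_p.
rewrite (cs_ext _ (fun a b => congr1 (fun z => F z (ant b)) (pS hp a))).
have hG : bilin (fun u v => F (ant u) (ant v)).
  by apply: bilinI => *; [exact: (lm_comp (blL hF _) (@antL _ _))|exact: (lm_comp (blR hF _) (@antL _ _))].
by rewrite (hx _ _ hG) ant1 /tsum big_map.
Qed.

End Main.

Section Main2.
Variables (K : fieldType) (A B : hopfType K) (p : A -> B) (C : B -> Prop).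
Hypotheses (hp : hopf_morph p) (hC : hopf_subalg C).

Lemma bilin_phi (phi : A -> K) : linK phi -> bilin (fun (a b : A) => phi a *: b).
Proof.
move=> hphi; apply: bilinI => [w|v]; first exact: (lm_scalK _ hphi).
by move=> ? ? ?; rewrite scalerDr !scalerA mulrC.
Qed.

Lemma hinv_phi (phi : A -> K) x : linK phi -> hinv p C x -> hinv p C (cs x (fun a b => phi a *: b)).
Proof.
move=> hphi /(hinvE p) [tx [Fx hx]]; apply/(hinvE p).
pose L := fun a : A => cs a (fun u v => phi u *: v).
have hL : lin_map L by apply: cs_lin; exact: bilin_phi.
exists [seq (q.1, L q.2) | q <- tx]; split; first by apply: Forall_mapI Fx.
move=> M F hF.
have hG := bilin_p hp hF.
rewrite [cs x _]/cs [tsum _ (cop x)]/tsum (lm_sum (cs_lin hG)).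
rewrite (eq_bigr (fun q => cs q.2 (fun b c => phi q.1 *: F (p b) c))); last first.
  move=> q _; rewrite (lmZ (cs_lin hG)) /cs /tsum scaler_sumr //.
have tg : trilin (fun a b c => phi a *: F (p b) c).
  apply: trilinI => *; first exact: (lm_scalK _ hphi).
  - exact: (lm_scal _ (lm_comp (blL hF _) (pL hp))).
  - exact: (lm_scal _ (blR hF _)).
rewrite -(coassocE (g := fun a b c => phi a *: F (p b) c)) //.
rewrite (eq_bigr (fun q => cs q.1 (fun a b => phi b *: F (p a) q.2))); last first.
  move=> q _; rewrite cocommE //; apply: bilinI => *; first exact: (lm_scalK _ hphi).
  exact: (lm_scal _ (lm_comp (blL hF _) (pL hp))).
have tg' : trilin (fun a b c => phi b *: F (p a) c).
  apply: trilinI => *.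
  - exact: (lm_scal _ (lm_comp (blL hF _) (pL hp))).
  - exact: (lm_scalK _ hphi).
  - exact: (lm_scal _ (blR hF _)).
rewrite (coassocE (g := fun a b c => phi b *: F (p a) c)) //.
rewrite (eq_bigr (fun q => F (p q.1) (L q.2))); last first.
  move=> q _; rewrite /L /cs /tsum (lm_sum (blR hF _)); apply: eq_bigr => r _.
  by rewrite (lmZ (blR hF _)).
have hH : bilin (fun u v => F u (L v)).
  by apply: bilinI => *; [exact: blL|exact: (lm_comp (blR hF _) hL)].
have := hx _ _ hH; rewrite /cs /tsum => ->.
by rewrite big_map.
Qed.


Lemma hinv_cop x : hinv p C x -> exists t : seq (A * A),
  List.Forall (fun q => hinv p C q.1 /\ hinv p C q.2) t /\ tens_eq (cop x) t.
Proof.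
move=> hx; have [t [ht [f1 f2]]] := both_free (cop x).
exists t; split=> //.
apply: (@Forall_nthI _ _ ((0 : A), (0 : A))) => k kn; split.
- have kn2 : (k < size (map snd t))%N by rewrite size_map.
  have [phi [lphi hphi]] := dual f2 kn2.
  have e := @extract _ _ _ (swapl t) phi k.
  rewrite /swapl size_map -map_comp (nth_map (0, 0)) // big_map /= in e.
  rewrite -e //; last by move=> i ilt; rewrite hphi ?size_map.
  have hb : bilin (fun (a b : A) => phi b *: a).
    apply: bilinI => [w|v]; last exact: (lm_scalK _ lphi).
    by move=> ? ? ?; rewrite scalerDr !scalerA mulrC.
  have := tens_eqE ht hb; rewrite /tsum => <-.
  have := cocommE x hb; rewrite /cs /tsum /= => ->.
  exact: (hinv_phi lphi hx).
- have kn1 : (k < size (map fst t))%N by rewrite size_map.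
  have [phi [lphi hphi]] := dual f1 kn1.
  rewrite -(extract (t := t) (phi := phi) kn); last by move=> i ilt; rewrite hphi ?size_map.
  have := tens_eqE ht (bilin_phi lphi); rewrite /tsum => <-.
  exact: hinv_phi.
Qed.

End Main2.

Lemma Forall_mapT (T U : Type) (Q : U -> Prop) (f : T -> U) (t : seq T) :
  (forall q, Q (f q)) -> List.Forall Q (map f t).
Proof. move=> h; elim: t => //= a l IH; constructor => //. Qed.

Unset Implicit Arguments.
Theorem lemma2p6 (K : fieldType) (A B : hopfType K) (p : A -> B) (C : B -> Prop) :
  hopf_morph p -> hopf_subalg C ->
  (forall x : A, hinv p C x -> C (p x)) /\
  hopf_subalg (hinv p C) /\
  (forall (D : hopfType K) (f : D -> A) (g : D -> {y : B | C y}),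
     hopf_morph f -> hopf_morph (fun d => proj1_sig (g d)) ->
     (forall d, p (f d) = proj1_sig (g d)) ->
     exists! h : D -> {x : A | hinv p C x},
       hopf_morph (fun d => proj1_sig (h d)) /\
       (forall d, proj1_sig (h d) = f d) /\
       (forall d, p (proj1_sig (h d)) = proj1_sig (g d))).
Proof.
move=> hp hC; split; first by move=> x; exact: part1.
split.
  split.
  - exact: hinv1.
  - by move=> a x y; apply: hinv_lin.
  - by move=> x y; apply: hinv_mul.
  - by move=> x; apply: hinv_ant.
  - by move=> x; apply: hinv_cop.
move=> D f g hf hg hfg.
pose g' := fun d => proj1_sig (g d).
have hd : forall d, hinv p C (f d).
  move=> d; apply/(hinvE p).
  exists [seq (g' q.1 - cou q.1 *: 1, f q.2) | q <- cop d]; split.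
    apply: Forall_mapT => q /=; split.
      apply: CD => //; first exact: (proj2_sig (g q.1)).
      by rewrite -scaleNr; apply: CZ => //; exact: C1.
    rewrite (lkB (@couL _ _)) (lkZ (@couL _ _)) cou1 mulr1.
    by rewrite /g' (pcou hg) subrr.
  move=> M F hF.
  rewrite (pcop hf _ (bilin_p hp hF)).
  rewrite (cs_ext _ (fun a b => congr1 (fun z => F z (f b)) (hfg a))).
  rewrite /tsum big_map /=.
  rewrite (eq_bigr (fun q => F (g' q.1) (f q.2) - cou q.1 *: F 1 (f q.2))); last first.
    by move=> q _; rewrite (lmB (blL hF _)) (lmZ (blL hF _)).
  rewrite big_split /= sumrN.
  have e : \sum_(q <- cop d) cou q.1 *: F 1 (f q.2) = F 1 (f d).
    have ct := counitlE d; rewrite /cs /tsum in ct.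
    have := lm_sum (lm_comp (blR hF 1) (pL hf)) (cop d) (fun q => cou q.1 *: q.2).
    rewrite /= ct => ->; apply: eq_bigr => q _.
    by rewrite (lmZ (lm_comp (blR hF 1) (pL hf))).
  by rewrite e addrCA subrr addr0.
exists (fun d => exist _ (f d) (hd d)); split.
  by split=> //; exact: hf.
move=> h' [_ [e1 _]]; apply: functional_extensionality => d.
move: (e1 d); case: (h' d) => v pv /= ev; subst v.
by congr exist; apply: proof_irrelevance.
Qed.
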